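(* The classes $\mathsf{WA}$ and $\mathsf{CT}^{\mathsf{obl}}_{\forall\forall}$ are incomparable with respect to inclusion.
   Context: A tgd is $\alpha(\bar x,\bar y)\rightarrow\exists\bar z\,\beta(\bar x,\bar z)$ with $\bar x$ the variables in both body and head. A position is $(R,i)$ with $1\le i\le\mathrm{arity}(R)$. The dependency graph of a finite tgd set $\Sigma$ has positions as vertices and an edge $(R,i)\to(S,j)$ whenever some tgd of $\Sigma$ has a variable $x\in\bar x$ at $(R,i)$ in its body and either $x$ occurs at $(S,j)$ in its head (universal edge) or an existential variable occurs at $(S,j)$ in its head (existential edge). $\mathsf{WA}$ (weakly acyclic) is the class of $\Sigma$ whose dependency graph has no cycle through an existential edge. Oblivious chase: from an instance (finite set of atoms over constants and nulls), repeatedly fire triggers $(\xi,h)$ with $h(\alpha)\subseteq$ current instance (active or not), each trigger at most once, adding $h'(\beta)$ with fresh nulls for existential variables; infinite sequences are fair. $\mathsf{CT}^{\mathsf{obl}}_{\forall\forall}$ is the class of finite tgd sets for which every oblivious chase sequence from every instance is finite. *)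

(* Defs.v *)
From Stdlib Require Import List Relations.
Import ListNotations.

(* A relation symbol is a nat; a schema assigns an arity to each symbol. *)
Definition schema := nat -> nat.

(* An atom of a tgd: relation symbol and the list of its variables (nats). *)
Definition vatom := (nat * list nat)%type.

Record tgd := mkTgd { body : list vatom ; head : list vatom }.

Definition vars_of (l : list vatom) : list nat := flat_map snd l.

Definition frontier (t : tgd) (x : nat) : Prop :=
  In x (vars_of (body t)) /\ In x (vars_of (head t)).

Definition existential (t : tgd) (z : nat) : Prop :=
  In z (vars_of (head t)) /\ ~ In z (vars_of (body t)).

Definition wf_vatom (ar : schema) (a : vatom) : Prop :=
  length (snd a) = ar (fst a).

Definition wf_tgd (ar : schema) (t : tgd) : Prop :=
  body t <> [] /\ head t <> [] /\
  (forall a, In a (body t) -> wf_vatom ar a) /\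
  (forall a, In a (head t) -> wf_vatom ar a).

Definition wf_tgds (ar : schema) (Sg : list tgd) : Prop :=
  forall t, In t Sg -> wf_tgd ar t.

(* A position (R, i); argument indices are 0-based here, i < arity R. *)
Definition position := (nat * nat)%type.

Definition univ_edge (Sg : list tgd) (p q : position) : Prop :=
  exists t, In t Sg /\
  exists x R args Q args' i j,
    p = (R, i) /\ q = (Q, j) /\
    In (R, args) (body t) /\ nth_error args i = Some x /\ frontier t x /\
    In (Q, args') (head t) /\ nth_error args' j = Some x.

Definition exist_edge (Sg : list tgd) (p q : position) : Prop :=
  exists t, In t Sg /\
  exists x z R args Q args' i j,
    p = (R, i) /\ q = (Q, j) /\
    In (R, args) (body t) /\ nth_error args i = Some x /\ frontier t x /\
    In (Q, args') (head t) /\ nth_error args' j = Some z /\ existential t z.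

Definition dep_edge (Sg : list tgd) (p q : position) : Prop :=
  univ_edge Sg p q \/ exist_edge Sg p q.

Definition weakly_acyclic (Sg : list tgd) : Prop :=
  ~ exists p q, exist_edge Sg p q /\ clos_refl_trans position (dep_edge Sg) q p.

Definition in_WA (ar : schema) (Sg : list tgd) : Prop :=
  wf_tgds ar Sg /\ weakly_acyclic Sg.

Inductive value := Const (c : nat) | Null (n : nat).

Definition fact := (nat * list value)%type.

(* instances are finite sets of facts, represented by lists *)
Definition instance := list fact.

Definition wf_instance (ar : schema) (I : instance) : Prop :=
  forall f, In f I -> length (snd f) = ar (fst f).

Definition apply_atom (h : nat -> value) (a : vatom) : fact :=
  (fst a, map h (snd a)).

Definition is_trigger (Sg : list tgd) (I : instance) (t : tgd) (h : nat -> value) : Prop :=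
  In t Sg /\ forall a, In a (body t) -> In (apply_atom h a) I.

Definition same_trigger (t : tgd) (h : nat -> value) (t' : tgd) (h' : nat -> value) : Prop :=
  t = t' /\ forall x, In x (vars_of (body t)) -> h x = h' x.

Definition null_occurs (n : nat) (I : instance) : Prop :=
  exists R args, In (R, args) I /\ In (Null n) args.

Definition fresh_extension (t : tgd) (h h' : nat -> value) (I : instance) : Prop :=
  (forall x, In x (vars_of (body t)) -> h' x = h x) /\
  (forall z, existential t z -> exists n, h' z = Null n /\ ~ null_occurs n I) /\
  (forall z1 z2, existential t z1 -> existential t z2 -> h' z1 = h' z2 -> z1 = z2).

(* An infinite oblivious chase sequence of S from I, with instances [inst k],
   fired triggers (tr k, hs k) and extensions hs' k; it is required to be fair. *)
Definition infinite_obl_chase (Sg : list tgd) (I : instance)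
    (inst : nat -> instance) (tr : nat -> tgd) (hs hs' : nat -> nat -> value) : Prop :=
  inst 0 = I /\
  (forall k, is_trigger Sg (inst k) (tr k) (hs k)) /\
  (forall j k, j < k -> ~ same_trigger (tr j) (hs j) (tr k) (hs k)) /\
  (forall k, fresh_extension (tr k) (hs k) (hs' k) (inst k)) /\
  (forall k, inst (S k) = map (apply_atom (hs' k)) (head (tr k)) ++ inst k) /\
  (forall k t h, is_trigger Sg (inst k) t h ->
     exists j, same_trigger t h (tr j) (hs j)).

(* CT^obl_forall-forall: every oblivious chase sequence from every instance
   is finite, i.e. there is no infinite (fair) one. *)
Definition in_CT_obl (ar : schema) (Sg : list tgd) : Prop :=
  wf_tgds ar Sg /\
  forall I, wf_instance ar I ->
  forall inst tr hs hs', ~ infinite_obl_chase Sg I inst tr hs hs'.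

(* Main.v *)
Require Import Defs.
From Stdlib Require Import List Relations Lia Arith.
Import ListNotations.

Definition t1 : tgd := mkTgd [(0,[0])] [(0,[1])].
Definition val1 (k : nat) : value := match k with 0 => Const 0 | S m => Null m end.
Fixpoint inst1 (k : nat) : instance :=
  match k with 0 => [(0,[Const 0])] | S m => (0,[Null m]) :: inst1 m end.
Definition hs1 (k : nat) : nat -> value := fun _ => val1 k.
Definition hs1' (k : nat) : nat -> value :=
  fun v => match v with 0 => val1 k | _ => Null k end.

Lemma inst1_null k R args n : In (R,args) (inst1 k) -> In (Null n) args -> n < k.
Proof.
  induction k; simpl; intros H1 H2.
  - destruct H1 as [H|[]]; inversion H; subst. simpl in H2. destruct H2 as [H3|[]]; discriminate.
  - destruct H1 as [H|H].
    + inversion H; subst. simpl in H2. destruct H2 as [H3|[]]. inversion H3; lia.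
    + specialize (IHk H H2); lia.
Qed.

Lemma inst1_val k v : In (0,[v]) (inst1 k) -> exists j, v = val1 j.
Proof.
  induction k; simpl; intros H.
  - destruct H as [H|[]]. inversion H. exists 0; reflexivity.
  - destruct H as [H|H]; auto. inversion H. exists (S k); reflexivity.
Qed.

Lemma val1_inj j k : val1 j = val1 k -> j = k.
Proof. destruct j, k; simpl; intro H; inversion H; auto. Qed.

Lemma part1 : exists (ar : schema) (S : list tgd), in_WA ar S /\ ~ in_CT_obl ar S.
Proof.
  exists (fun _ => 1), [t1]. split.
  - split.
    + intros t [H|[]]; subst. unfold wf_tgd; simpl; repeat split; try discriminate;
      intros a [H|[]]; subst; reflexivity.
    + intros [p [q [[t [Ht [x [z [R [args [Q [args' [i [j Hx]]]]]]]]]] _]]].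
      destruct Ht as [Ht|[]]; subst.
      destruct Hx as [_ [_ [_ [_ [[F1 F2] _]]]]]. simpl in F1, F2.
      destruct F1 as [F1|[]]; destruct F2 as [F2|[]]; lia.
  - intros [_ H]. apply (H (inst1 0) ltac:(intros f [Hf|[]]; subst; reflexivity)
      inst1 (fun _ => t1) hs1 hs1').
    unfold infinite_obl_chase. split; [reflexivity|]. split; [|split; [|split; [|split]]].
    + intro k. split; [left; reflexivity|]. intros a [Ha|[]]; subst.
      destruct k; simpl; auto.
    + intros j k Hjk [_ Hs]. specialize (Hs 0 (or_introl eq_refl)).
      apply val1_inj in Hs. lia.
    + intro k. split; [|split].
      * intros x [Hx|[]]; subst; reflexivity.
      * intros z [Z1 Z2]. simpl in Z1, Z2. destruct Z1 as [Z1|[]]; subst.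
        exists k; split; [reflexivity|].
        intros [R [args [Hi Hn]]]. apply (inst1_null _ _ _ _ Hi) in Hn. lia.
      * intros z1 z2 [Z1 _] [Z2 _]. simpl in Z1, Z2.
        destruct Z1 as [Z1|[]]; destruct Z2 as [Z2|[]]; congruence.
    + intro k; reflexivity.
    + intros k t h [[Ht|[]] Hb]; subst.
      specialize (Hb _ (or_introl eq_refl)). simpl in Hb.
      destruct (inst1_val _ _ Hb) as [j Hj]. exists j. split; [reflexivity|].
      intros x [Hx|[]]; subst. exact Hj.
Qed.

Definition t2 : tgd := mkTgd [(0,[0;0])] [(0,[0;1])].

Lemma part2 : exists (ar : schema) (S : list tgd), in_CT_obl ar S /\ ~ in_WA ar S.
Proof.
  exists (fun _ => 2), [t2]. split.
  - split.
    { intros t [H|[]]; subst. unfold wf_tgd; simpl; repeat split; try discriminate;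
      intros a [H|[]]; subst; reflexivity. }
    intros I HI inst tr hs hs' [H0 [Htr [Hd [Hf [Hs _]]]]].
    assert (Ht : forall k, tr k = t2) by (intro k; destruct (Htr k) as [[H|[]] _]; auto).
    assert (Hinv : forall k v, In (0,[v;v]) (inst k) -> In (0,[v;v]) I).
    { induction k; intros v Hv.
      - rewrite H0 in Hv; exact Hv.
      - rewrite Hs, Ht in Hv. simpl in Hv. destruct Hv as [Hv|Hv]; auto.
        destruct (Hf k) as [Hx [Hz _]]. rewrite Ht in Hx, Hz.
        destruct (Hz 1) as [n [Hn Hno]].
        { split; simpl; [tauto| intros [E|[E|[]]]; discriminate]. }
        unfold apply_atom in Hv; simpl in Hv.
        rewrite Hx in Hv by (simpl; tauto).
        inversion Hv. exfalso. apply Hno.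
        destruct (Htr k) as [_ Hb]. rewrite Ht in Hb.
        specialize (Hb _ (or_introl eq_refl)). simpl in Hb.
        unfold apply_atom in Hb; simpl in Hb.
        exists 0, [hs k 0; hs k 0]. split; auto. rewrite <- H2, Hn. simpl; auto. }
    set (L := map (fun f => hd (Const 0) (snd f)) I).
    set (M := map (fun k => hs k 0) (seq 0 (S (length I)))).
    assert (ND : NoDup M).
    { unfold M. apply NoDup_map_NoDup_ForallPairs; [|apply seq_NoDup].
      intros a b _ _ E. destruct (Nat.lt_trichotomy a b) as [Hab|[Hab|Hab]]; auto.
      - exfalso. apply (Hd a b Hab). rewrite Ht, Ht. split; auto.
        intros x Hx. simpl in Hx. destruct Hx as [<-|[<-|[]]]; auto.
      - exfalso. apply (Hd b a Hab). rewrite Ht, Ht. split; auto.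
        intros x Hx. simpl in Hx. destruct Hx as [<-|[<-|[]]]; auto. }
    assert (INC : incl M L).
    { intros v Hv. unfold M in Hv. apply in_map_iff in Hv. destruct Hv as [k [<- _]].
      destruct (Htr k) as [_ Hb]. rewrite Ht in Hb.
      specialize (Hb _ (or_introl eq_refl)). simpl in Hb.
      apply Hinv in Hb. unfold L. apply in_map_iff. eexists; split; [|exact Hb]. reflexivity. }
    pose proof (NoDup_incl_length ND INC) as Hl.
    unfold M, L in Hl. rewrite !length_map in Hl. rewrite length_seq in Hl. exact (Nat.nle_succ_diag_l _ Hl).
  - intros [_ HW]. apply HW. exists (0,1), (0,1). split; [|apply rt_refl].
    exists t2. split; [left; reflexivity|].
    exists 0, 1, 0, [0;0], 0, [0;1], 1, 1. simpl.
    repeat split; auto; simpl; try tauto.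
    intros [E|[E|[]]]; discriminate.
Qed.

Theorem proposition6 :
  (exists (ar : schema) (S : list tgd), in_WA ar S /\ ~ in_CT_obl ar S) /\
  (exists (ar : schema) (S : list tgd), in_CT_obl ar S /\ ~ in_WA ar S).
Proof. split; [exact part1 | exact part2]. Qed.
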